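(* Let $p$ be a prime, $k \ge 1$ an integer, $q = p^k$, and $n = q^2 + q + 1$. Let $P$ be the set of points of the projective plane over the finite field $\mathbb{F}_q$ (the one-dimensional subspaces of $\mathbb{F}_q^3$; $|P| = n$), and let $L_1, \dots, L_n \subseteq P$ be its lines (for each nonzero $u \in \mathbb{F}_q^3$ up to scalar, the line $\{[v] \in P : u_1v_1 + u_2v_2 + u_3v_3 = 0\}$), each identified with its set of points. Identify the $n$ partitions with the points of $P$. Let $G = (V, E)$ be a finite graph and let $\psi : V \to \{L_1, \dots, L_n\}$ be any map. An FPP partition of $G$ is an assignment of each edge $\{u, v\} \in E$ to a partition (point) in $\psi(u) \cap \psi(v)$ (this intersection is a single point if $\psi(u) \neq \psi(v)$, and is the whole line $\psi(u)$ if $\psi(u) = \psi(v)$). For each point $x \in P$ let $E_x$ be the set of edges assigned to $x$, and let $RF = \frac{\sum_{x \in P} |V(E_x)|}{|V|}$, where $V(E_x)$ is the set of vertices incident to at least one edge of $E_x$. Then $RF \le q + 1$, and $\sqrt{n} \le q + 1 \le \sqrt{n} + 1$; in particular $RF \le \sqrt{n} + 1$.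
   Context: Every line of the projective plane over $\mathbb{F}_q$ contains exactly $q+1$ points, and any two distinct lines meet in exactly one point. *)

(* Defs.v *)
From HB Require Import structures.
From mathcomp Require Import all_boot all_order all_algebra all_field.
Set Implicit Arguments. Unset Strict Implicit. Unset Printing Implicit Defensive.
Import Order.TTheory GRing.Theory Num.Theory.
Local Open Scope ring_scope.

(* Projective plane PG(2, F) over a finite field F.
   A point [v] (v <> 0) is represented by the set of vectors of its
   one-dimensional subspace {a v | a in F}. *)
Section PG.
Variable F : finFieldType.

Definition pspan (v : 'rV[F]_3) : {set 'rV[F]_3} := [set a *: v | a : F].

Definition points : {set {set 'rV[F]_3}} :=
  [set pspan v | v in [set w : 'rV[F]_3 | w != 0]].

Definition dotp (u v : 'rV[F]_3) : F := \sum_(i < 3) u 0 i * v 0 i.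

Definition pline (u : 'rV[F]_3) : {set {set 'rV[F]_3}} :=
  [set x in points | [forall v in x, dotp u v == 0]].

Definition lines : {set {set {set 'rV[F]_3}}} :=
  [set pline u | u in [set w : 'rV[F]_3 | w != 0]].
End PG.

(* Main.v *)
Require Import Defs.
From HB Require Import structures.
From mathcomp Require Import all_boot all_order all_algebra all_field.
From mathcomp Require Import zify.
Import Order.TTheory GRing.Theory Num.Theory.
Local Open Scope ring_scope.

Section H.
Variable F : finFieldType.

Lemma pspan_scale (a : F) (v : 'rV[F]_3) : a != 0 -> pspan (a *: v) = pspan v.
Proof.
move=> a0; apply/setP=> w; apply/imsetP/imsetP => [[b _ ->]|[b _ ->]].
  by exists (b * a) => //; rewrite scalerA.
by exists (b / a) => //; rewrite scalerA mulfVK.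
Qed.

Lemma in_pspan_nz (v w : 'rV[F]_3) : w \in pspan v -> w != 0 -> pspan w = pspan v.
Proof.
case/imsetP=> a _ -> nz; apply: pspan_scale.
by apply: contraNneq nz => ->; rewrite scale0r.
Qed.

Lemma ker_card (u : 'rV[F]_3) : u != 0 ->
  (#|[set v : 'rV[F]_3 | dotp u v == 0%R]| <= #|F| * #|F|)%N.
Proof.
move=> u0.
have [k uk] : exists k, u 0 k != 0.
  case: (pickP (fun k => u 0 k != 0)) => [k hk|h]; first by exists k.
  case/negP: u0; apply/eqP/rowP => i; rewrite !mxE.
  by apply/eqP; move/negbT: (h i); rewrite negbK.
pose g (v : 'rV[F]_3) := (v 0 (lift k 0), v 0 (lift k 1)).
have ginj : {in [set v : 'rV[F]_3 | dotp u v == 0] &, injective g}.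
  move=> v w; rewrite !inE => /eqP hv /eqP hw [h0 h1].
  have hj : forall j : 'I_2, v 0 (lift k j) = w 0 (lift k j).
    move=> j; have [->|->] : j = 0 \/ j = 1.
      by case: j => [[|[|//]] hj]; [left|right]; apply/val_inj.
    by []. by [].
  have hk : v 0 k = w 0 k.
    have : \sum_(i < 3) u 0 i * (v 0 i - w 0 i) = 0.
      rewrite (eq_bigr (fun i => u 0 i * v 0 i - u 0 i * w 0 i)); last first.
        by move=> i _; rewrite mulrBr.
      by rewrite sumrB; move: hv hw; rewrite /dotp => -> ->; rewrite subr0.
    rewrite (bigD1 k) //= big1 ?addr0; last first.
      move=> i ik; case: (unliftP k i) => [j ->|ei]; first by rewrite hj subrr mulr0.
      by rewrite ei eqxx in ik.
    by move/eqP; rewrite mulf_eq0 (negbTE uk) /= subr_eq0 => /eqP.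
  apply/rowP => i.
  by case: (unliftP k i) => [j ->|->].
rewrite -(card_in_imset ginj).
apply: leq_trans (max_card _) _.
by rewrite card_prod.
Qed.

Definition rep (x : {set 'rV[F]_3}) : 'rV[F]_3 := odflt 0 [pick v in x | v != 0].

Lemma repP x : x \in points F -> [/\ rep x != 0, rep x \in x & pspan (rep x) = x].
Proof.
case/imsetP=> v0; rewrite inE => v0nz ->.
have v0in : v0 \in pspan v0 by apply/imsetP; exists 1; rewrite ?scale1r.
rewrite /rep; case: pickP => [r /andP[rx rnz] | h] /=.
  by split => //; apply: in_pspan_nz.
by move: (h v0); rewrite v0in v0nz.
Qed.

Lemma line_card (u : 'rV[F]_3) : u != 0 -> (1 < #|F|)%N ->
  (#|pline u| <= (#|F|).+1)%N.
Proof.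
move=> u0 F1.
set L := pline u.
set K := [set v : 'rV[F]_3 | dotp u v == 0].
pose A := setX L [set~ (0 : F)].
pose h (xa : {set 'rV[F]_3} * F) := xa.2 *: rep xa.1.
have Lp : forall x, x \in L -> x \in points F by move=> x; rewrite inE => /andP[].
have hinj : {in A &, injective h}.
  move=> [x a] [y b]; rewrite !in_setX /= !in_setC1 /h /= => /andP[xL a0] /andP[yL b0] e.
  have [rx0 rxx px] := repP x (Lp _ xL).
  have [ry0 ryy py] := repP y (Lp _ yL).
  have exy : x = y by rewrite -px -py -(pspan_scale a (rep x) a0) e pspan_scale.
  subst y; congr (_, _).
  move/eqP: e; rewrite -subr_eq0 -scalerBl => /eqP e.
  by move: (@scaler_eq0 F _ (a - b) (rep x)); rewrite e eqxx (negbTE rx0) orbF subr_eq0 => /esym/eqP.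
have sub : h @: A \subset K :\ (0%R : 'rV[F]_3).
  apply/subsetP => _ /imsetP[[x a] + ->]; rewrite in_setX /= in_setC1 /h => /andP[xL a0].
  have [rx0 rxx px] := repP x (Lp _ xL).
  rewrite in_setD1 inE.
  have -> : (a *: rep x != 0) by rewrite scaler_eq0 negb_or a0 rx0.
  rewrite /=.
  move: xL; rewrite inE => /andP[_ /forallP/(_ (a *: rep x))/implyP H]; apply: H; have : a *: rep x \in pspan (rep x) by apply/imsetP; exists a.
  by rewrite px.
have hK : (#|K :\ (0%R : 'rV[F]_3)| = #|K| - 1)%N.
  rewrite [in RHS](cardsD1 0%R K) inE /dotp big1 ?eqxx; first by rewrite add1n subn1.
  by move=> i _; rewrite mxE mulr0.
have := subset_leq_card sub.
rewrite hK (card_in_imset hinj) cardsX cardsC1.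
have := ker_card u u0; rewrite -/K.
have e : (#|F|.+1 * #|F|.-1 = #|F| * #|F| - 1)%N.
  case: #|F| F1 => [|m] // _ /=; rewrite !(mulSn, mulnS); lia.
move: e; generalize #|K| (#|L| * #|F|.-1)%N (#|F| * #|F|)%N => a b c e h1 h3.
have h4 : (#|L| * #|F|.-1 <= #|F|.+1 * #|F|.-1)%N.
  by rewrite e; apply: leq_trans h3 (leq_sub2r 1 h1).
by move: h4; rewrite leq_pmul2r //; case: #|F| F1 => [|[|m]].
Qed.
End H.

Theorem theorem4 (p k : nat) (F : finFieldType) (R : rcfType)
  (V : finType) (E : {set {set V}})
  (psi : V -> {set {set 'rV[F]_3}}) (f : {set V} -> {set 'rV[F]_3}) :
  prime p -> (0 < k)%N -> #|F| = (p ^ k)%N ->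
  (forall e, e \in E -> #|e| = 2%N) ->
  (forall v, psi v \in lines F) ->
  (forall e, e \in E -> forall u v, u \in e -> v \in e ->
      f e \in psi u :&: psi v) ->
  let q := (p ^ k)%N in
  let n := (q ^ 2 + q + 1)%N in
  let RF : R := (\sum_(x in points F)
                   #|\bigcup_(e in [set e in E | f e == x]) e|)%:R / #|V|%:R in
  [/\ RF <= (q + 1)%:R,
      Num.sqrt (n%:R : R) <= (q + 1)%:R,
      (q + 1)%:R <= Num.sqrt (n%:R : R) + 1
    & RF <= Num.sqrt (n%:R : R) + 1].
Proof.
move=> pp k0 hF hE hpsi hf q n RF.
have q1 : (1 < q)%N.
  rewrite /q; have := prime_gt1 pp; move: k0; clear; case: k => // k _.
  have := expn_gt0 p k; rewrite expnS => h1 h2; nia.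
have lineb : forall v, (#|psi v| <= q.+1)%N.
  move=> v; case/imsetP: (hpsi v) => u /[!inE] u0 ->.
  by rewrite /q -hF; apply: line_card => //; rewrite hF.
have key : ((\sum_(x in points F)
                   #|\bigcup_(e in [set e in E | f e == x]) e|) <= #|V| * q.+1)%N.
  rewrite (eq_bigr (fun x => \sum_v (if v \in \bigcup_(e in [set e in E | f e == x]) e then 1 else 0))%N); last first.
    by move=> x _; rewrite -sum1_card big_mkcond.
  rewrite exchange_big /= -sum_nat_const.
  apply: leq_sum => v _.
  rewrite -big_mkcondr sum1_card.
  apply: leq_trans (lineb v).
  apply: subset_leq_card; apply/subsetP => x; rewrite unfold_in => /andP[_ /bigcupP[e]].
  rewrite inE => /andP[eE /eqP <-] ve.
  by have := hf e eE v v ve ve; rewrite setIid.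
have RFb : RF <= (q + 1)%:R.
  rewrite /RF; case: (posnP #|V|) => [->|Vp].
    by rewrite invr0 mulr0 ler0n.
  rewrite ler_pdivrMr ?ltr0n // -natrM ler_nat addn1.
  by rewrite mulnC.
have s1 : Num.sqrt (n%:R : R) <= (q + 1)%:R.
  rewrite -[X in _ <= X](ger0_norm (ler0n _ _)) -sqrtr_sqr ler_sqrt ?exprn_ge0 ?ler0n //.
  rewrite -natrX ler_nat /n; nia.
have s2 : (q + 1)%:R <= Num.sqrt (n%:R : R) + 1.
  rewrite natrD lerD2r.
  rewrite -[X in X <= _](ger0_norm (ler0n _ q)) -sqrtr_sqr ler_sqrt ?ler0n //.
  rewrite -natrX ler_nat /n; nia.
split => //.
exact: le_trans RFb s2.
Qed.
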